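(* Let $n\ge1$ and let $\mu$ be the Möbius function of the finite poset $(\hat N^n,\le)$, where $\le$ is the componentwise order, and set $M(\vec v)=\mu((1,1,\dots,1),\vec v)$ (note $(1,\dots,1)$ is the minimum). Then for $\vec v=(v_1,\dots,v_n)\in\hat N^n$: if $v_i\in\{1,i\}$ for every $i$, then $M(\vec v)=(-1)^{t_{\vec v}}$ where $t_{\vec v}=\#\{i\ge2:\ v_i=i\}$; otherwise $M(\vec v)=0$.
   Context: $Y_n$ is the set of planar rooted binary trees with $n$ internal vertices ($n+1$ leaves) up to isotopy, with grafting $\tau_1\vee\tau_2$ (new root, left subtree $\tau_1$, right subtree $\tau_2$). A complete expression in $x_1,\dots,x_{n+1}$ is a full binary parenthesization of $x_1\cdots x_{n+1}$ (every product of two factors, including the outermost, in parentheses); trees correspond bijectively to complete expressions via $|\mapsto x_1$, $\tau_1\vee\tau_2\mapsto(E_1E_2)$ with consecutive relabelling. Name of $\tau\in Y_n$: the vector $\vec v\in\mathbb N^n$ with $v_i=i$ if at least one left parenthesis stands immediately left of $x_i$ in the complete expression of $\tau$; otherwise the rightmost of the right parentheses immediately following $x_i$ matches a left parenthesis in the run immediately preceding some $x_j$, and $v_i=j$. $\hat N^n$ is the set of names of trees of $Y_n$. The componentwise order is $\vec v\le\vec w$ iff $v_i\le w_i$ for all $i$ (this order on names corresponds to the Tamari order on trees). *)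

(* Defs.v *)
From HB Require Import structures.
From mathcomp Require Import all_boot all_order all_algebra.
From mathcomp Require Import zify.
Set Implicit Arguments. Unset Strict Implicit. Unset Printing Implicit Defensive.
Import GRing.Theory Num.Theory.

(* Planar rooted binary trees (up to isotopy = this inductive type). *)
Inductive tree := Leaf | Node of tree & tree.

Fixpoint tree_eqb (t u : tree) : bool :=
  match t, u with
  | Leaf, Leaf => true
  | Node l r, Node l' r' => tree_eqb l l' && tree_eqb r r'
  | _, _ => false
  end.

Lemma tree_eqP : Equality.axiom tree_eqb.
Proof.
elim=> [|l IHl r IHr] [|l' r'] /=; try by constructor.
by apply: (iffP andP) => [[/IHl-> /IHr->]|[<- <-]]; split; [apply/IHl|apply/IHr].
Qed.

HB.instance Definition _ := hasDecEq.Build tree tree_eqP.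

Fixpoint internal (t : tree) : nat :=
  match t with Leaf => 0 | Node l r => (internal l + internal r).+1 end.
Fixpoint leaves (t : tree) : nat :=
  match t with Leaf => 1 | Node l r => leaves l + leaves r end.

Fixpoint trees_le (n : nat) : seq tree :=
  match n with
  | 0 => [:: Leaf]
  | n'.+1 => Leaf :: [seq Node lr.1 lr.2 | lr <- [seq (l, r) | l <- trees_le n', r <- trees_le n']]
  end.
Definition Y (n : nat) : seq tree := [seq t <- trees_le n | internal t == n].

Lemma mem_trees_le n t : internal t <= n -> t \in trees_le n.
Proof.
elim: n t => [|n IH] [|l r] //= H; rewrite inE //.
apply/orP; right; apply/mapP; exists (l, r) => //.
apply/allpairsP; exists (l, r) => /=; split=> //; apply: IH; lia.
Qed.

Lemma mem_Y n t : (t \in Y n) = (internal t == n).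
Proof.
rewrite mem_filter; case: eqP => //= <-; exact: mem_trees_le.
Qed.

(* Complete expressions: tokens '(' , ')' and x_k. *)
Inductive token := LP | RP | X of nat.

Fixpoint expr_from (t : tree) (k : nat) : seq token :=
  match t with
  | Leaf => [:: X k]
  | Node l r => LP :: expr_from l k ++ expr_from r (k + leaves l) ++ [:: RP]
  end.
Definition expr (t : tree) : seq token := expr_from t 1.

Definition is_LP (tk : token) : bool := if tk is LP then true else false.
Definition is_Xi (i : nat) (tk : token) : bool := if tk is X k then k == i else false.

(* position (0-based) of x_i in s *)
Definition pos_of (s : seq token) (i : nat) : nat := find (is_Xi i) s.
Fixpoint lead_RP (s : seq token) : nat :=
  match s with RP :: s' => (lead_RP s').+1 | _ => 0 end.
(* Given the REVERSED prefix s of an expression strictly before a right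
   parenthesis, at nesting depth d (d = 1 initially), the distance back to
   the matching left parenthesis. *)
Fixpoint match_len (s : seq token) (d : nat) : nat :=
  match s with
  | [::] => 0
  | LP :: s' => if d == 1 then 1 else (match_len s' d.-1).+1
  | RP :: s' => (match_len s' d.+1).+1
  | X _ :: s' => (match_len s' d).+1
  end.
Fixpoint first_label (s : seq token) : nat :=
  match s with
  | [::] => 0
  | X k :: _ => k
  | _ :: s' => first_label s'
  end.

Definition name_comp (s : seq token) (i : nat) : nat :=
  let p := pos_of s i in
  if (0 < p) && is_LP (nth RP s p.-1) then i
  else
    let q := p + lead_RP (drop p.+1 s) in      (* rightmost ')' of the run after x_i *)
    let m := q - match_len (rev (take q s)) 1 in (* its matching '(' *)
    first_label (drop m s).                   (* the x_j that run precedes *)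

Definition name (t : tree) : seq nat :=
  [seq name_comp (expr t) i | i <- iota 1 (internal t)].

Definition hatN (n : nat) : seq (seq nat) := undup [seq name t | t <- Y n].

Definition vle (v w : seq nat) : bool := all2 leq v w.
Definition vlt (v w : seq nat) : bool := (v != w) && vle v w.

(* Möbius function of the finite poset (P, vle):
   mu(x,x) = 1, mu(x,y) = - sum_{x <= z < y} mu(x,z) for x < y, 0 otherwise.
   Computed with fuel; fuel size P exceeds the length of any chain in P. *)
Fixpoint mob_aux (P : seq (seq nat)) (k : nat) (x y : seq nat) : int :=
  if x == y then 1%R else
  match k with
  | 0 => 0%R
  | k'.+1 => if vlt x y then (- \sum_(z <- P | vle x z && vlt z y) mob_aux P k' x z)%R
             else 0%R
  end.
Definition mobius (P : seq (seq nat)) (x y : seq nat) : int := mob_aux P (size P) x y.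

(* v_i, 1-based *)
Definition vcoord (v : seq nat) (i : nat) : nat := nth 0 v i.-1.

(* Main.v *)
Require Import Defs.
From mathcomp Require Import all_boot all_order all_algebra.
From mathcomp Require Import zify.
Import GRing.Theory Num.Theory.

Fixpoint nm (t : tree) (k : nat) : seq nat :=
  match t with Leaf => [::] | Node l r => nm l k ++ k :: nm r (k + leaves l) end.

Lemma leavesE t : leaves t = (internal t).+1.
Proof. elim: t => //= l IHl r IHr; rewrite IHl IHr; lia. Qed.

Lemma size_nm t k : size (nm t k) = internal t.
Proof. elim: t k => //= l IHl r IHr k; rewrite size_cat /= IHl IHr; lia. Qed.

Lemma count_Xi t k i :
  count (is_Xi i) (expr_from t k) = (k <= i < k + leaves t).
Proof.
elim: t k => [|l IHl r IHr] k /=.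
  by rewrite addn0; case: (eqVneq k i) => [->|ne]; lia.
rewrite count_cat /= count_cat /= IHl IHr !addn0.
lia.
Qed.

Lemma last_expr y t k : ~~ is_LP (last y (expr_from t k)).
Proof. case: t => //= l r; by rewrite !last_cat. Qed.

Lemma dec_expr t k : exists G m,
  expr_from t k = G ++ X (k + leaves t).-1 :: nseq m RP /\
  (match t with Leaf => G = [::] | Node _ _ => forall y, ~~ is_LP (last y G) end).
Proof.
elim: t k => [|l IHl r IHr] k /=.
  by exists [::], 0; rewrite addn1.
have [G [m [E HG]]] := IHr (k + leaves l).
exists (LP :: expr_from l k ++ G), m.+1; split.
  rewrite E -addnA; set z := (_ .-1).
  have Hn : nseq m RP ++ [:: RP] = nseq m.+1 RP by elim: (m) => //= m0 ->.
  by rewrite /= -!catA /= Hn.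
move=> y /=; rewrite last_cat.
clear IHr; case: r E HG => [|r1 r2] E HG; first by rewrite HG last_expr.
exact: HG.
Qed.

Lemma lead_RP_expr t k s : lead_RP (expr_from t k ++ s) = 0.
Proof. by case: t. Qed.

Lemma first_label_expr t k s : first_label (expr_from t k ++ s) = k.
Proof. elim: t k s => //= l IHl r IHr k s; by rewrite -catA IHl. Qed.

Lemma match_len_expr t k s d : 0 < d ->
  match_len (rev (expr_from t k) ++ s) d = size (expr_from t k) + match_len s d.
Proof.
elim: t k s d => [|l IHl r IHr] k s d d0 /=; first by rewrite add1n.
rewrite rev_cons !rev_cat /= -cats1 -!catA IHr // IHl //=.
case: d d0 => // d _ /=.
rewrite !size_cat /=; lia.
Qed.

Lemma lead_RP_nseq m s : lead_RP (nseq m RP ++ s) = m + lead_RP s.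
Proof. by elim: m => //= m ->. Qed.
Lemma noX_G l k G m i : expr_from l k = G ++ X i :: nseq m RP ->
  has (is_Xi i) G = false.
Proof.
move=> E; have := count_Xi l k i; rewrite E count_cat /= eqxx.
have -> : count (is_Xi i) (nseq m RP) = 0 by elim: m {E}.
move=> H; apply/negbTE; rewrite has_count.
have Hin : k <= i < k + leaves l.
  apply/negPn/negP => Hn; move: H; rewrite (negbTE Hn); lia.
move: H; rewrite Hin; lia.
Qed.

Lemma drop_cons_cat (A R : seq token) x : drop (size A).+1 (A ++ x :: R) = R.
Proof. by elim: A => [|a A IH] /=; [rewrite drop0 | ]. Qed.

Lemma name_comp_expr t k i P S : k <= i -> i.+1 < k + leaves t -> ~~ has (is_Xi i) P ->
  name_comp (P ++ expr_from t k ++ S) i = nth 0 (nm t k) (i - k).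
Proof.
elim: t k i P S => [|l IHl r IHr] k i P S Hk /= Hi HP; first lia.
set el := expr_from l k; set er := expr_from r (k + leaves l).
rewrite /= -!catA /=.
have Hll := leavesE l; have Hsl := size_nm l k.
case: (ltnP i.+1 (k + leaves l)) => H1.
  have -> : P ++ LP :: el ++ er ++ RP :: S = rcons P LP ++ el ++ (er ++ RP :: S).
    by rewrite -cats1 -catA.
  rewrite IHl // ?has_rcons ?negb_or ?HP ?andbT // nth_cat Hsl.
  by have -> : i - k < internal l by lia.
case: (ltnP i (k + leaves l)) => H2.
  have Hi' : i = (k + leaves l).-1 by lia.
  rewrite nth_cat Hsl (_ : i - k < internal l = false); last by apply/negbTE; lia.
  rewrite (_ : i - k - internal l = 0); last by lia.
  move: Hi' HP; clear IHl IHr H1 H2 Hk Hi => Hi' HP.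
  have Her : lead_RP (er ++ RP :: S) = 0 by exact: lead_RP_expr.
  clearbody er; rewrite /el; clear el; case: l Hll Hsl Hi' => [|l1 l2] Hll Hsl Hi'.
    rewrite /= addn1 /= in Hi'; subst i.
    have E : P ++ LP :: X k :: er ++ RP :: S = rcons P LP ++ X k :: (er ++ RP :: S).
      by rewrite -cats1 -catA.
    rewrite E /name_comp /pos_of find_cat has_rcons /= (negbTE HP) /=.
    by rewrite eqxx addn0 size_rcons /= nth_cat size_rcons ltnSn nth_rcons ltnn eqxx.
  have [G [m [EG HG]]] := dec_expr (Node l1 l2) k.
  rewrite -Hi' in EG.
  have HG0 := @noX_G _ _ _ _ _ EG.
  set E := P ++ LP :: expr_from (Node l1 l2) k ++ er ++ RP :: S.
  set e1 := expr_from l1 k; set e2 := expr_from l2 (k + leaves l1).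
  have E1 : E = (P ++ LP :: G) ++ X i :: (nseq m RP ++ er ++ RP :: S).
    by rewrite /E EG -!catA.
  have E2 : E = (P ++ LP :: LP :: e1 ++ e2) ++ RP :: (er ++ RP :: S).
    by rewrite /E /= -?catA /= -?catA /= -?catA.
  have E3 : E = rcons P LP ++ (expr_from (Node l1 l2) k ++ er ++ RP :: S).
    by rewrite /E -cats1 -catA.
  have Hsz : size G + m = size e1 + size e2 + 1.
    have := congr1 size EG; rewrite /= !size_cat /= size_nseq -/e1 -/e2; lia.
  have Hp : pos_of E i = size P + (size G).+1.
    by rewrite E1 /pos_of find_cat has_cat /= HG0 (negbTE HP) /= eqxx addn0 size_cat.
  have Hb : is_LP (nth RP E (pos_of E i).-1) = false.
    rewrite Hp (_ : (size P + (size G).+1).-1 = (size (P ++ LP :: G)).-1); last by rewrite size_cat.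
    rewrite E1 nth_cat (_ : _ < _ = true); last by rewrite size_cat /=; lia.
    rewrite nth_last last_cat /=; exact/negbTE/HG.
  have Hl : lead_RP (drop (pos_of E i).+1 E) = m.
    rewrite Hp E1 (_ : (size P + (size G).+1).+1 = (size (P ++ LP :: G)).+1); last first.
      by rewrite !size_cat.
    by rewrite drop_cons_cat lead_RP_nseq Her addn0.
  rewrite /name_comp -/E Hb andbF Hl Hp.
  have Hq : size P + (size G).+1 + m = size (P ++ LP :: LP :: e1 ++ e2).
    rewrite /= !size_cat /= !size_cat; lia.
  have Ht : take (size (P ++ LP :: LP :: e1 ++ e2)) E = P ++ LP :: LP :: e1 ++ e2.
    by rewrite E2 take_size_cat.
  have Hm : match_len (rev (P ++ LP :: LP :: e1 ++ e2)) 1 = size e2 + size e1 + 1.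
    rewrite rev_cat rev_cons rev_cons rev_cat -!cats1 -!catA.
    by rewrite match_len_expr // match_len_expr //= -/e1 -/e2 addnA.
  rewrite Hq Ht Hm.
  rewrite (_ : _ - _ = size (rcons P LP)); last by rewrite size_rcons !size_cat /= size_cat; lia.
  by rewrite E3 drop_size_cat // first_label_expr.
have HP' : ~~ has (is_Xi i) (P ++ LP :: el).
  rewrite has_cat negb_or HP /= has_count count_Xi; apply/negP; lia.
have -> : P ++ LP :: el ++ er ++ RP :: S = (P ++ LP :: el) ++ er ++ (RP :: S).
  by rewrite -!catA.
rewrite IHr //; last by lia.
rewrite nth_cat Hsl (_ : i - k < internal l = false); last by apply/negbTE; lia.
by rewrite (_ : i - k - internal l = (i - (k + leaves l)).+1) //; lia.
Qed.

Lemma name_nm t : name t = nm t 1.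
Proof.
apply: (@eq_from_nth _ 0); first by rewrite size_map size_iota size_nm.
move=> j; rewrite size_map size_iota => Hj.
rewrite (nth_map 0) ?size_iota // nth_iota // /expr.
have -> : expr_from t 1 = [::] ++ expr_from t 1 ++ [::] by rewrite cats0.
rewrite name_comp_expr; [by rewrite add1n subn1 | lia | rewrite leavesE; lia | by []].
Qed.

Lemma nm_bounds t k j : j < internal t -> k <= nth 0 (nm t k) j <= k + j.
Proof.
elim: t k j => [|l IHl r IHr] k j //= Hj.
rewrite nth_cat size_nm; case: ltnP => H1; first by have := IHl k j H1; lia.
case: (eqVneq j (internal l)) => [->|ne]; first by rewrite subnn /=; lia.
have -> : j - internal l = (j - internal l - 1).+1 by lia.
rewrite /=; have := IHr (k + leaves l) (j - internal l - 1); rewrite leavesE; lia.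
Qed.

Lemma nm_nest t k : all (pred1 k) (nm t k) \/
  exists j, 0 < j < internal t /\ nth 0 (nm t k) j = k + j.
Proof.
elim: t k => [|l IHl r IHr] k /=; first by left.
case: (IHl k) => [Hall|[j [Hj Hv]]]; last first.
  right; exists j; split; first lia.
  by rewrite nth_cat size_nm (_ : j < internal l) //; lia.
case: r {IHr} => [|r1 r2].
  by left; rewrite all_cat Hall /= eqxx.
right; exists (internal l).+1; split; first by rewrite /=; lia.
rewrite nth_cat size_nm ltnNge leqnSn /= subSn // subnn /=.
have := @nm_bounds (Node r1 r2) (k + leaves l) 0 isT; rewrite leavesE /=; lia.
Qed.

Fixpoint addR t := match t with Leaf => Node Leaf Leaf | Node l r => Node l (addR r) end.

Lemma internal_addR t : internal (addR t) = (internal t).+1.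
Proof. by elim: t => //= l _ r ->; rewrite addnS. Qed.

Lemma nm_addR t k : nm (addR t) k = rcons (nm t k) (k + internal t).
Proof.
elim: t k => [|l _ r IHr] k /=; first by rewrite addn0.
rewrite IHr rcons_cat /= leavesE; congr (_ ++ _ :: rcons _ _); lia.
Qed.

Lemma build v : (forall j, j < size v -> nth 0 v j = 1 \/ nth 0 v j = j.+1) ->
  exists t, internal t = size v /\ nm t 1 = v.
Proof.
elim/last_ind: v => [|v x IH] H; first by exists Leaf.
have [t [Ht Hv]] : exists t, internal t = size v /\ nm t 1 = v.
  apply: IH => j Hj; have := H j; rewrite size_rcons nth_rcons Hj; apply; lia.
have := H (size v); rewrite size_rcons nth_rcons ltnn eqxx => /(_ (ltnSn _)) [->|->].
  exists (Node t Leaf); split; [rewrite /= Ht; lia | by rewrite /= cats1 Hv].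
exists (addR t); split; [by rewrite internal_addR Ht | by rewrite nm_addR Ht Hv add1n].
Qed.

Lemma memP n y : y \in hatN n <-> exists t, internal t = n /\ y = nm t 1.
Proof.
rewrite mem_undup; split.
  by case/mapP => t; rewrite mem_Y => /eqP <- ->; exists t; rewrite name_nm.
by case=> t [Ht ->]; apply/mapP; exists t; rewrite ?mem_Y ?Ht ?name_nm.
Qed.

Lemma P_props n y : y \in hatN n ->
  size y = n /\ (forall i, 0 < i <= n -> 1 <= vcoord y i <= i).
Proof.
case/memP => t [Ht ->]; rewrite size_nm; split=> // i Hi.
have := @nm_bounds t 1 i.-1; rewrite /vcoord; lia.
Qed.

Lemma P_nest n y : y \in hatN n -> y != nseq n 1 ->
  exists i0, 1 < i0 <= n /\ vcoord y i0 = i0.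
Proof.
case/memP => t [Ht ->] Hne; case: (nm_nest t 1) => [/all_pred1P|[j [Hj Hv]]].
  by rewrite size_nm Ht => E; rewrite E eqxx in Hne.
by exists j.+1; rewrite /vcoord /= Hv; split; lia.
Qed.

Lemma B_in n v : size v = n ->
  (forall i, 0 < i <= n -> vcoord v i = 1 \/ vcoord v i = i) -> v \in hatN n.
Proof.
move=> Hs H; apply/memP.
have [|t [Ht Hv]] := build v; last by exists t; rewrite Ht Hs.
move=> j Hj; have := H j.+1; rewrite /vcoord /=; apply; lia.
Qed.

Lemma vle_refl v : vle v v.
Proof. by elim: v => //= x s ->; rewrite leqnn. Qed.

Lemma vle_trans u v w : vle u v -> vle v w -> vle u w.
Proof.
elim: u v w => [|a u IH] [|b v] [|c w] //= /andP[h1 h2] /andP[h3 h4].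
by rewrite (leq_trans h1 h3) (IH _ _ h2 h4).
Qed.

Lemma vle_anti u v : vle u v -> vle v u -> u = v.
Proof.
elim: u v => [|a u IH] [|b v] //= /andP[h1 h2] /andP[h3 h4].
by congr (_ :: _); [apply/eqP; rewrite eqn_leq h1 h3 | exact: IH].
Qed.

Lemma vleP v w : vle v w <-> size v = size w /\ forall j, j < size v -> nth 0 v j <= nth 0 w j.
Proof.
elim: v w => [|a v IH] [|b w] /=; first by split.
- by split => // -[].
- by split => // -[].
split.
  move/andP=> [h1 /IH [hs hn]]; split; first by rewrite hs.
  by case=> [|j] //= Hj; exact: hn.
case=> [[hs] hn]; apply/andP; split; first exact: (hn 0 isT).
by apply/IH; split=> // j Hj; exact: (hn j.+1 Hj).
Qed.

Lemma vlt_trans a b c : vlt a b -> vlt b c -> vlt a c.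
Proof.
rewrite /vlt => /andP[n1 l1] /andP[n2 l2]; rewrite (@vle_trans _ _ _ l1 l2) andbT.
apply/negP => /eqP E; subst c; move/negP: n2; apply; apply/eqP; exact: vle_anti.
Qed.

Lemma vlt_irr a : vlt a a = false.
Proof. by rewrite /vlt eqxx. Qed.

Lemma count_lt (T : eqType) (a b : pred T) s z :
  subpred a b -> z \in s -> b z -> ~~ a z -> count a s < count b s.
Proof.
move=> sab; elim: s => // x s IH; rewrite inE => /orP[/eqP <- | Hz] bz naz /=.
  by rewrite bz (negbTE naz) /=; have := sub_count sab s; lia.
have := IH Hz bz naz; have : a x <= b x by case ax: (a x) => //; rewrite (sab _ ax).
lia.
Qed.

Lemma count_lt_size (T : eqType) (a : pred T) s z : z \in s -> ~~ a z -> count a s < size s.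
Proof.
move=> Hz naz; rewrite -(count_predC a s).
have : 0 < count (predC a) s by rewrite -has_count; apply/hasP; exists z.
lia.
Qed.

Lemma sign_flip (s : seq nat) x (a b : pred nat) : uniq s -> x \in s ->
  {in s, forall y, y != x -> a y = b y} -> a x = ~~ b x ->
  ((-1) ^+ count a s = - (-1) ^+ count b s :> int)%R.
Proof.
move=> Us Hx H ax; have Hp := perm_to_rem Hx.
rewrite (permP Hp a) (permP Hp b) /=.
have -> : count a (rem x s) = count b (rem x s).
  apply: eq_in_count => y Hy; apply: H; first exact: mem_rem Hy.
  by move: Hy; rewrite mem_rem_uniq // inE => /andP[].
by rewrite !exprD ax; case: (b x); rewrite /= ?expr1 ?expr0 ?mulN1r ?mul1r ?opprK.
Qed.

Lemma inv_sum (s : seq (seq nat)) (f : seq nat -> seq nat) (G : seq nat -> int) :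
  uniq s -> {in s, forall z, f z \in s} -> {in s, forall z, f (f z) = z} ->
  {in s, forall z, G (f z) = - G z}%R -> (\sum_(z <- s) G z = 0)%R.
Proof.
move=> Us Hin Hinv HG.
have Hperm : perm_eq s (map f s).
  apply: uniq_perm => //.
    rewrite map_inj_in_uniq // => x y Hx Hy E.
    by rewrite -(Hinv x Hx) -(Hinv y Hy) E.
  move=> z; apply/idP/idP => Hz.
    by apply/mapP; exists (f z); [exact: Hin | rewrite Hinv].
  by case/mapP: Hz => y Hy ->; exact: Hin.
have E : (\sum_(z <- s) G z = - \sum_(z <- s) G z)%R.
  rewrite {1}(perm_big _ Hperm) big_map -sumrN.
  by apply: eq_big_seq => z Hz; rewrite HG.
lia.
Qed.

Definition isB n (z : seq nat) := all (fun i => (vcoord z i == 1) || (vcoord z i == i)) (iota 1 n).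
Definition gg n (z : seq nat) : int :=
  (if isB n z then (-1) ^+ count (fun i => vcoord z i == i) (iota 2 n.-1) else 0)%R.

Lemma isBP n z : isB n z -> forall i, 0 < i <= n -> vcoord z i = 1 \/ vcoord z i = i.
Proof.
move=> /allP H i Hi; have : i \in iota 1 n by rewrite mem_iota; lia.
by move/H => /orP[/eqP|/eqP]; [left|right].
Qed.

Lemma sum_zero n y : y \in hatN n -> y != nseq n 1 ->
  (\sum_(z <- hatN n | vle z y) gg n z = 0)%R.
Proof.
move=> Hy Hne; have [i0 [Hi0 Hyi0]] := P_nest _ _ Hy Hne.
have [Hsy Hby] := P_props _ _ Hy.
pose f z := set_nth 0 z i0.-1 (if vcoord z i0 == 1 then i0 else 1).
have Hvf : forall z i, 0 < i ->
    vcoord (f z) i = if i == i0 then (if vcoord z i0 == 1 then i0 else 1) else vcoord z i.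
  move=> z i Hi; rewrite /vcoord /f nth_set_nth /=.
  case: (eqVneq i i0) => [->|ne]; first by rewrite eqxx.
  by have -> : (i.-1 == i0.-1) = false by apply/negbTE; lia.
have Hsf : forall z, size z = n -> size (f z) = n.
  move=> z Hz; rewrite /f size_set_nth Hz; lia.
rewrite big_mkcond (eq_bigr (fun z => if vle z y && isB n z then gg n z else 0%R)); last first.
  by move=> z _; rewrite /gg; case: (vle z y); case: (isB n z).
rewrite -big_mkcond -big_filter.
have Hmem : forall z, z \in [seq z <- hatN n | vle z y && isB n z] ->
    [/\ z \in hatN n, vle z y, isB n z & size z = n].
  move=> z; rewrite mem_filter => /andP[/andP[h1 h2] h3]; split=> //.
  by have [] := P_props _ _ h3.
apply: (inv_sum _ f).
- by rewrite filter_uniq // undup_uniq.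
- move=> z /Hmem [zP zy zB zs]; have zBP := isBP _ _ zB.
  have fB : isB n (f z).
    apply/allP => i; rewrite mem_iota => Hi; rewrite Hvf; last by lia.
    case: (eqVneq i i0) => [->|ne]; first by case: (vcoord z i0 == 1); rewrite eqxx ?orbT.
    by have [->|->] := zBP i ltac:(lia); rewrite eqxx ?orbT.
  rewrite mem_filter fB andbT; apply/andP; split.
    apply/vleP; rewrite Hsf // Hsy; split=> // j Hj.
    have := Hvf z j.+1 isT; rewrite /vcoord /= => ->.
    case: (eqVneq j.+1 i0) => [E|ne].
      have Hyj : nth 0 y j = i0 by rewrite -Hyi0 /vcoord -E.
      rewrite Hyj; case: ifP => _; lia.
    by move/vleP: zy => [_ ]; apply; rewrite zs.
  apply: B_in; first exact: Hsf.
  move=> i Hi; rewrite Hvf; last by lia.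
  case: (eqVneq i i0) => [->|ne]; last exact: zBP.
  by case: (vcoord z i0 == 1); [right|left].
- move=> z /Hmem [zP zy zB zs]; have zBP := isBP _ _ zB.
  apply: (@eq_from_nth _ 0); first by rewrite !Hsf.
  move=> j; rewrite !Hsf // => Hj.
  have := Hvf (f z) j.+1 isT; rewrite /vcoord /= => ->.
  have := Hvf z j.+1 isT; rewrite /vcoord /= => ->.
  case: (eqVneq j.+1 i0) => [E|ne] //.
  rewrite -/(vcoord (f z) i0) Hvf; last by lia.
  rewrite eqxx; rewrite -E.
  have := zBP j.+1 ltac:(lia); rewrite /vcoord /= => -[->|->].
    by rewrite eqxx (_ : (j.+1 == 1) = false) //; apply/negbTE; lia.
  case: (eqVneq j.+1 1) => [E1|ne1]; first by rewrite E1.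
  by rewrite eqxx.
- move=> z /Hmem [zP zy zB zs]; have zBP := isBP _ _ zB.
  have fB : isB n (f z).
    apply/allP => i; rewrite mem_iota => Hi; rewrite Hvf; last by lia.
    case: (eqVneq i i0) => [->|ne]; first by case: (vcoord z i0 == 1); rewrite eqxx ?orbT.
    by have [->|->] := zBP i ltac:(lia); rewrite eqxx ?orbT.
  rewrite /gg fB zB; apply: (sign_flip _ i0); first exact: iota_uniq.
  + by rewrite mem_iota; lia.
  + move=> i; rewrite mem_iota => Hi ne; rewrite Hvf ?(negbTE ne) //; lia.
  + rewrite Hvf ?eqxx; last by lia.
    have n1 : (i0 == 1) = false by apply/negbTE; lia.
    have n1' : (1 == i0) = false by rewrite eq_sym.
    have := zBP i0 ltac:(lia); case=> ->; first by rewrite !eqxx n1'.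
    by rewrite n1 n1' eqxx.
Qed.

Lemma gg0 n : gg n (nseq n 1) = 1%R.
Proof.
have Hv : forall i, 0 < i <= n -> vcoord (nseq n 1) i = 1.
  by move=> i Hi; rewrite /vcoord nth_nseq (_ : i.-1 < n); last lia.
rewrite /gg (_ : isB n _ = true); last first.
  by apply/allP => i; rewrite mem_iota => Hi; rewrite Hv ?eqxx //; lia.
rewrite (@eq_in_count _ _ pred0) ?count_pred0 //.
move=> i; rewrite mem_iota => Hi /=; rewrite Hv; last by lia.
by apply/negbTE; lia.
Qed.

Lemma le0 n y : y \in hatN n -> vle (nseq n 1) y.
Proof.
move=> Hy; have [Hs Hb] := P_props _ _ Hy; apply/vleP; rewrite size_nseq Hs; split=> // j Hj.
rewrite nth_nseq Hj; have := Hb j.+1; rewrite /vcoord /=; lia.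
Qed.

Lemma mob_main n k y : y \in hatN n -> count (fun z => vlt z y) (hatN n) < k ->
  mob_aux (hatN n) k (nseq n 1) y = gg n y.
Proof.
elim: k y => [|k IH] y Hy Hc //=.
case: eqVneq => [<-|Hne]; first by rewrite gg0.
rewrite /vlt Hne le0 //= -/vlt.
have -> : (\sum_(z <- hatN n | vle (nseq n 1) z && vlt z y) mob_aux (hatN n) k (nseq n 1) z
          = \sum_(z <- hatN n | vlt z y) gg n z)%R.
  rewrite big_seq_cond [RHS]big_seq_cond; apply: eq_big => [z|z /andP[Hz Hzy]].
    by case Hz: (z \in hatN n); rewrite //= le0.
  apply: IH => //.
  have : count (fun w => vlt w z) (hatN n) < count (fun w => vlt w y) (hatN n).
    apply: (count_lt _ _ _ _ z) => //; [|by case/andP: Hzy|by rewrite vlt_irr].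
    by move=> w /= Hw; case/andP: Hzy => _ Hzy; exact: (vlt_trans _ _ _ Hw Hzy).
  lia.
have Hsplit : (\sum_(z <- hatN n | vle z y) gg n z =
               gg n y + \sum_(z <- hatN n | vlt z y) gg n z)%R.
  rewrite big_mkcond (bigD1_seq y) ?undup_uniq //= vle_refl.
  rewrite [in RHS]big_mkcond (bigD1_seq y Hy) ?undup_uniq //= vlt_irr add0r.
  by congr (_ + _)%R; apply: eq_bigr => z Hz; rewrite /vlt Hz.
move: Hsplit; rewrite sum_zero //; last by rewrite eq_sym.
lia.
Qed.

Theorem mainTheorem3 (n : nat) (v : seq nat) :
  1 <= n -> v \in hatN n ->
  mobius (hatN n) (nseq n 1) v =
    (if all (fun i => (vcoord v i == 1%N) || (vcoord v i == i)) (iota 1 n)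
     then (-1) ^+ (count (fun i => vcoord v i == i) (iota 2 n.-1))
     else 0)%R.
Proof.
move=> _ Hv; rewrite /mobius mob_main //.
apply: (count_lt_size _ _ _ v) => //; by rewrite vlt_irr.
Qed.
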